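(* Let $\lambda>0$, $f:\mathbb{R}^n\to\mathbb{R}$ twice continuously differentiable, $\varphi=f+\lambda\|\cdot\|_1$, and $x^0$ with $\mathcal{L}_\varphi(x^0)$ bounded and $f$ twice uniformly Lipschitz continuously differentiable on an open neighborhood of it. Suppose that at iteration $k$ of HPGNCM (described in the context) the MEO is invoked and returns a direction with curvature less than or equal to $-\frac12\varepsilon_h$ (so that a negative curvature step is taken). Then $$\varphi(x^k)-\varphi(x^{k+1})>\frac18c_{nc}\min\{\varepsilon_g\varepsilon_h,\varepsilon_h^3\},\qquad c_{nc}=\eta\theta^2\min\Big\{1,\frac{9(1-2\eta)^2}{L_H^2}\Big\}.$$
   Context: $L_H>0$ is such that $f(y)\le f(x)+\nabla f(x)^\top(y-x)+\frac12(y-x)^\top\nabla^2f(x)(y-x)+\frac{L_H}6\|y-x\|^3$ for $x,y\in\mathcal{L}_\varphi(x^0)=\{x:\varphi(x)\le\varphi(x^0)\}$. $\mathcal{G}_t(x):=t(x-\mathrm{prox}_{\frac\lambda t\|\cdot\|_1}(x-\frac1t\nabla f(x)))$; $\mathrm{sgn}(0)=1$; $g(x)_i=(\nabla f(x))_i+\lambda$ ($x_i>0$), $(\nabla f(x))_i-\lambda$ ($x_i<0$), $(\nabla f(x))_i-\min\{\max\{-\lambda,(\nabla f(x))_i\},\lambda\}$ ($x_i=0$). MEO: given symmetric $H$, tolerance $\epsilon$, failure probability $\sigma$, returns either $\hat\lambda\le-\epsilon/2$ and unit $v$ with $v^\top Hv=\hat\lambda$, or a certificate that $\lambda_{\min}(H)\ge-\epsilon$.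 HPGNCM (parameters $0<\varepsilon_g,\varepsilon_h<1$, $\beta>1$, $\bar\eta\in(0,1]$, $\eta\in(0,\frac12)$, $\theta\in(0,1)$, $t_0=1$, $t_k$ the most recently computed step parameter): if $\|\mathcal{G}_{t_k}(x^k)\|>\varepsilon_g$, proximal gradient step $x^{k+1}=\mathrm{prox}_{\frac\lambda{t_k}\|\cdot\|_1}(x^k-\frac1{t_k}\nabla f(x^k))$ with $t_k=\beta^{j_k}$, $j_k$ the smallest nonnegative $j$ with $\varphi(\mathrm{prox}_{\frac\lambda{\beta^j}\|\cdot\|_1}(x^k-\beta^{-j}\nabla f(x^k)))<\varphi(x^k)-\frac{\bar\eta}{\beta^j}\|\mathcal{G}_{\beta^j}(x^k)\|^2$. Otherwise, with $I^k_{\neq0}=\{i:x^k_i\neq0\}$, $I^k_0=\{i:x^k_i=0\}$, $S^k=\mathrm{Diag}(s)$ ($s_i=1$ if $|x^k_i|>\varepsilon_g^{1/2}$, else $s_i=x^k_i$), call MEO with $\epsilon=\varepsilon_h$ on $H_k=S^k_{I^k_{\neq0}}(\nabla^2f(x^k))_{I^k_{\neq0}}S^k_{I^k_{\neq0}}$; on certificate stop; otherwise with the returned unit $u$ ($u^\top H_ku=\lambda_{\min}\le-\varepsilon_h/2$) set $d^k_{I^k_{\neq0}}=-\mathrm{sgn}((g(x^k)_{I^k_{\neq0}})^\top S^k_{I^k_{\neq0}}u)|u^\top H_ku|u$, $d^k_{I^k_0}=0$, and $x^{k+1}=x^k+\theta^{j_k}S^kd^k$ with $j_k$ the smallest nonnegative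 integer $j$ such that $\varphi(x^k+\theta^jS^kd^k)<\varphi(x^k)-\eta\theta^{2j}\|d^k\|^3$. *)

(* Defs.v *)
From HB Require Import structures.
From mathcomp Require Import all_boot all_order all_algebra.
From mathcomp Require Import all_classical all_reals all_analysis.
Set Implicit Arguments. Unset Strict Implicit. Unset Printing Implicit Defensive.
Import Order.TTheory GRing.Theory Num.Theory.
Import numFieldNormedType.Exports.
Local Open Scope classical_set_scope.
Local Open Scope ring_scope.

Section HPGNCM.
Variables (R : realType) (n : nat).
Local Notation vec := 'rV[R]_n.

Definition evec (i : 'I_n) : vec := delta_mx 0 i.
Definition dotv (u v : vec) : R := \sum_i u 0 i * v 0 i.
Definition enorm (v : vec) : R := Num.sqrt (dotv v v).
Definition norm1 (v : vec) : R := \sum_i `|v 0 i|.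
Definition frob (M : 'M[R]_n) : R := Num.sqrt (\sum_i \sum_j M i j ^+ 2).
Definition quadf (M : 'M[R]_n) (v : vec) : R := dotv v (v *m M).

Definition grad (f : vec -> R) (x : vec) : vec := \row_i 'D_(evec i) f x.
Definition hess (f : vec -> R) (x : vec) : 'M[R]_n :=
  \matrix_(i, j) 'D_(evec j) ('D_(evec i) f) x.

Definition twice_cont_diff (f : vec -> R) : Prop :=
  (forall x, differentiable f x) /\
  (forall i x, differentiable ('D_(evec i) f) x) /\
  (forall i j, continuous (fun x => hess f x i j)).

Definition phi (f : vec -> R) (lam : R) (x : vec) : R := f x + lam * norm1 x.
Definition level_set (f : vec -> R) (lam : R) (x0 : vec) : set vec :=
  [set x | phi f lam x <= phi f lam x0].

Definition ebounded_set (A : set vec) : Prop :=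
  exists M : R, forall x, A x -> enorm x <= M.

Definition hess_lipschitz_nbhd (f : vec -> R) (A : set vec) : Prop :=
  exists U : set vec, open U /\ A `<=` U /\
    exists L : R, forall x y, U x -> U y ->
      frob (hess f x - hess f y) <= L * enorm (x - y).

Definition cubic_bound (f : vec -> R) (A : set vec) (LH : R) : Prop :=
  forall x y, A x -> A y ->
    f y <= f x + dotv (grad f x) (y - x) + quadf (hess f x) (y - x) / 2
           + LH / 6 * enorm (y - x) ^+ 3.

(* prox_{c ||.||_1}(z) = argmin_p c ||p||_1 + 1/2 ||p - z||^2 (exists, unique) *)
Definition prox_l1 (c : R) (z : vec) : vec :=
  xget 0 [set p | forall y : vec,
    c * norm1 p + enorm (p - z) ^+ 2 / 2 <= c * norm1 y + enorm (y - z) ^+ 2 / 2].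

Definition Gmap (f : vec -> R) (lam t : R) (x : vec) : vec :=
  t *: (x - prox_l1 (lam / t) (x - t^-1 *: grad f x)).

Definition sgn (r : R) : R := if 0 <= r then 1 else -1.

Definition gvec (f : vec -> R) (lam : R) (x : vec) : vec :=
  \row_i (let a := grad f x 0 i in
          if 0 < x 0 i then a + lam
          else if x 0 i < 0 then a - lam
          else a - Num.min (Num.max (- lam) a) lam).

Definition Smat (eg : R) (x : vec) : 'M[R]_n :=
  diag_mx (\row_i (if Num.sqrt eg < `|x 0 i| then 1 else x 0 i)).

(* S ∇²f S on all n coordinates; its rows/columns on I_0 vanish, and its
   restriction to I_{≠0} is H_k *)
Definition Hk (f : vec -> R) (eg : R) (x : vec) : 'M[R]_n :=
  Smat eg x *m hess f x *m Smat eg x.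

Definition pg_cond f lam etab beta (x : vec) (j : nat) : Prop :=
  phi f lam (prox_l1 (lam / beta ^+ j) (x - beta ^- j *: grad f x))
  < phi f lam x - etab / beta ^+ j * enorm (Gmap f lam (beta ^+ j) x) ^+ 2.

Definition pg_step f lam eg etab beta (x : vec) (t : R) (x' : vec) (t' : R) : Prop :=
  eg < enorm (Gmap f lam t x) /\
  exists j : nat, pg_cond f lam etab beta x j /\
    (forall j' : nat, (j' < j)%N -> ~ pg_cond f lam etab beta x j') /\
    t' = beta ^+ j /\
    x' = prox_l1 (lam / t') (x - t'^-1 *: grad f x).

(* negative curvature step: MEO (tolerance eh) returned unit u, supported on
   I_{≠0}, with u H_k u^T = lambda_hat <= - eh / 2 *)
Definition nc_dir f lam eg (x u : vec) : vec :=
  (- sgn (dotv (gvec f lam x) (u *m Smat eg x)) * `|quadf (Hk f eg x) u|) *: u.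

Definition nc_cond f lam eta theta (x : vec) (Sd d : vec) (j : nat) : Prop :=
  phi f lam (x + theta ^+ j *: Sd) < phi f lam x - eta * theta ^+ (2 * j) * enorm d ^+ 3.

Definition nc_step f lam eg eh eta theta (x : vec) (t : R) (x' : vec) (t' : R) : Prop :=
  enorm (Gmap f lam t x) <= eg /\
  exists u : vec,
    enorm u = 1 /\ (forall i, x 0 i = 0 -> u 0 i = 0) /\
    quadf (Hk f eg x) u <= - eh / 2 /\
    let d := nc_dir f lam eg x u in
    let Sd := d *m Smat eg x in
    exists j : nat, nc_cond f lam eta theta x Sd d j /\
      (forall j' : nat, (j' < j)%N -> ~ nc_cond f lam eta theta x Sd d j') /\
      x' = x + theta ^+ j *: Sd /\ t' = t.

Definition hpg_step f lam eg eh etab beta eta theta x t x' t' : Prop :=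
  pg_step f lam eg etab beta x t x' t' \/ nc_step f lam eg eh eta theta x t x' t'.

End HPGNCM.

(* Main.v *)
Require Import Defs.
From HB Require Import structures.
From mathcomp Require Import all_boot all_order all_algebra.
From mathcomp Require Import all_classical all_reals all_analysis.
From mathcomp Require Import ring lra.
Set Implicit Arguments. Unset Strict Implicit. Unset Printing Implicit Defensive.
Import Order.TTheory GRing.Theory Num.Theory.
Import numFieldNormedType.Exports.
Local Open Scope classical_set_scope.
Local Open Scope ring_scope.

Section S.
Variables (R : realType) (n : nat).
Local Notation vec := 'rV[R]_n.

Lemma line_is_derive (f : vec -> R) (x v : vec) (b : R) :
  derivable f (b *: v + x) v ->
  is_derive b 1 (fun h : R => f (h *: v + x)) ('D_v f (b *: v + x)).
Proof.
move=> df.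
have E : (fun h : R => h^-1 *: (((fun h : R => f (h *: v + x)) \o shift b) (h *: 1)
            - (fun h : R => f (h *: v + x)) b)) =
         (fun h : R => h^-1 *: ((f \o shift (b *: v + x)) (h *: v) - f (b *: v + x))).
  apply/funext => h /=; congr (_ *: (f _ - _)).
  by rewrite scalerDl addrA; congr (_ *: _ + _ + _); rewrite /GRing.scale /= mulr1.
apply: DeriveDef.
  by rewrite /derivable E.
by rewrite /derive E.
Qed.
Lemma dir_grad (f : vec -> R) y v : differentiable f y -> 'D_v f y = dotv (grad f y) v.
Proof.
move=> df; rewrite deriveE // {1}(row_sum_delta v) linear_sum /dotv.
apply: eq_bigr => i _; rewrite linearZ /= mxE -deriveE // /GRing.scale /= mulrC.
by [].
Qed.

Lemma quadf_sum (M : 'M[R]_n) w :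
  quadf M w = \sum_i \sum_j w 0 i * w 0 j * M i j.
Proof.
rewrite /quadf /dotv exchange_big /=; apply: eq_bigr => j _.
rewrite mxE mulr_sumr; apply: eq_bigr => i _; ring.
Qed.

Lemma kp_derive (f : vec -> R) (x v : vec) (l : R) : twice_cont_diff f ->
  is_derive (0:R) (1:R) (fun h : R => dotv (grad f (h *: v + x)) v + l) (quadf (hess f x) v).
Proof.
move=> [df [ddf _]].
have -> : (fun h : R => dotv (grad f (h *: v + x)) v + l) =
  (\sum_(i < n) (fun h : R => v 0 i *: 'D_(evec R i) f (h *: v + x))) + cst l.
  apply/funext => h /=; rewrite /dotv fct_sumE; congr (_ + _).
  by apply: eq_bigr => i _; rewrite mxE /GRing.scale /= mulrC.
apply: is_derive_eq.
  apply: is_deriveD.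
  apply: is_derive_sum => i.
  have h1 := @line_is_derive _ x v 0 (@diff_derivable _ _ _ _ _ v (ddf i (0 *: v + x))).
  exact: (is_deriveZ (v 0 i) h1).
rewrite addr0 quadf_sum; apply: eq_bigr => i _.
rewrite scale0r add0r dir_grad // /dotv /GRing.scale /= mulr_sumr.
by apply: eq_bigr => j _; rewrite /hess /grad !mxE; ring.
Qed.

Lemma local_decrease (f : vec -> R) (x v : vec) (l : R) :
  twice_cont_diff f -> dotv (grad f x) v + l <= 0 -> quadf (hess f x) v < 0 ->
  exists2 del : R, 0 < del & forall b, 0 < b <= del -> f (b *: v + x) + b * l < f x.
Proof.
move=> tcd g0 q0.
have [df _] := tcd.
pose K := fun h : R => f (h *: v + x) + h * l.
pose Kp := fun h : R => dotv (grad f (h *: v + x)) v + l.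
have dK : forall b, is_derive b (1:R) K (Kp b).
  move=> b.
  have h1 := @line_is_derive f x v b (@diff_derivable _ _ _ _ _ v (df (b *: v + x))).
  have h2 := is_deriveZ l (@is_derive_id _ R^o b 1).
  have h3 := is_deriveD h1 h2.
  have -> : K = (fun h : R => f (h *: v + x)) + l \*: id.
    by apply/funext => h; rewrite /K /= /GRing.scale /= mulrC.
  move: h3; rewrite /Kp dir_grad // /GRing.scale /= mulr1.
  by [].
have d2 := @kp_derive f x v l tcd.
have cv := @ex_derive _ _ _ _ _ _ _ d2.
have := derive_val (is_derive := d2).
move: cv; rewrite /derivable /derive => /cvgP cv lq.
rewrite lq in cv.
have := cvgr_lt (FF := dnbhs_filter (0:R)) _ cv 0 q0.
rewrite /dnbhs /within /= => /nbhs_ballP [e /= e0 He].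
have Kpd : forall t, 0 < t < e -> Kp t < Kp 0.
  move=> t /andP[t0 te]; have := He t.
  rewrite /ball /= sub0r normrN gtr0_norm // => /(_ te (lt0r_neq0 t0)).
  rewrite /Kp /GRing.scale /= mulr1 addr0 pmulr_rlt0 ?invr_gt0 // subr_lt0.
  by [].
have Kp0 : Kp 0 <= 0 by rewrite /Kp scale0r add0r.
exists (e / 2); first by rewrite divr_gt0.
move=> b /andP[b0 bd].
have e2 : e / 2 < e by rewrite ltr_pdivrMr // ltr_pMr // ltr1n.
have hom := @ltr0_derive1_lt_cc R K 0 (e / 2).
have := hom _ _ _ b 0.
rewrite !in_itv /= lexx bd (ltW b0) divr_ge0 ?(ltW e0) //.
have -> : K 0 = f x by rewrite /K scale0r add0r mul0r addr0.
move=> H; apply: H => //.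
- move=> y; rewrite in_itv /= => /andP[y0 ye].
  rewrite derive1E; case: (dK y) => _ ->.
  apply: (lt_le_trans _ Kp0); apply: Kpd.
  by rewrite y0 (lt_trans ye e2).
- apply: continuous_subspaceT => y.
  apply: differentiable_continuous; apply/derivable1_diffP.
  by case: (dK y).
Qed.

Lemma dotv_ge0 (w : vec) : 0 <= dotv w w.
Proof. by apply: sumr_ge0 => i _; rewrite -expr2 sqr_ge0. Qed.

Lemma enorm_ge0 (w : vec) : 0 <= enorm w.
Proof. exact: sqrtr_ge0. Qed.

Lemma dotvZl c (a b : vec) : dotv (c *: a) b = c * dotv a b.
Proof. by rewrite /dotv mulr_sumr; apply: eq_bigr => i _; rewrite mxE mulrA. Qed.

Lemma dotvZr c (a b : vec) : dotv a (c *: b) = c * dotv a b.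
Proof. by rewrite /dotv mulr_sumr; apply: eq_bigr => i _; rewrite mxE; ring. Qed.

Lemma enormZ c (w : vec) : enorm (c *: w) = `|c| * enorm w.
Proof.
by rewrite /enorm dotvZl dotvZr mulrA -expr2 sqrtrM ?sqr_ge0 // sqrtr_sqr.
Qed.

Lemma enorm_mono (a b : vec) : (forall i, `|a 0 i| <= `|b 0 i|) -> enorm a <= enorm b.
Proof.
move=> H; apply: ler_wsqrtr; apply: ler_sum => i _.
rewrite -!expr2 -(real_normK (num_real (a 0 i))) -(real_normK (num_real (b 0 i))).
by rewrite lerXn2r ?nnegrE ?normr_ge0 ?H.
Qed.

Lemma coord_le (w : vec) i : `|w 0 i| <= enorm w.
Proof.
rewrite /enorm -sqrtr_sqr; apply: ler_wsqrtr.
rewrite /dotv (bigD1 i) //= expr2 lerDl.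
by apply: sumr_ge0 => j _; rewrite -expr2 sqr_ge0.
Qed.

Lemma quadfZ (M : 'M[R]_n) c w : quadf M (c *: w) = c ^+ 2 * quadf M w.
Proof.
rewrite !quadf_sum mulr_sumr; apply: eq_bigr => i _; rewrite mulr_sumr.
by apply: eq_bigr => j _; rewrite !mxE; ring.
Qed.

Lemma quadf_diag (M : 'M[R]_n) (s d : vec) :
  quadf M (d *m diag_mx s) = quadf (diag_mx s *m M *m diag_mx s) d.
Proof.
rewrite !quadf_sum; apply: eq_bigr => i _; apply: eq_bigr => j _.
by rewrite !mul_mx_diag mul_diag_mx !mxE; ring.
Qed.

Definition sig (a : R) : R := if 0 < a then 1 else if a < 0 then -1 else 0.

Lemma abs_step (a dd b se : R) : 0 <= b -> 0 < se < 1 -> b * `|dd| <= se ->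
  `|a + b * (dd * (if se < `|a| then 1 else a))| =
  `|a| + b * (sig a * (dd * (if se < `|a| then 1 else a))).
Proof.
move=> b0 /andP[se0 se1] bd.
have h1 : b * dd <= b * `|dd| by rewrite ler_wpM2l // ler_norm.
have h2 : - (b * `|dd|) <= b * dd.
  by rewrite -mulrN ler_wpM2l // lerNl -normrN ler_norm.
rewrite /sig; case: (ltrgt0P a) => ha.
- case: ifP => hs.
    by rewrite gtr0_norm; [ring | lra].
  rewrite gtr0_norm; first by ring.
  have : 0 < 1 + b * dd by lra.
  move=> h; have -> : a + b * (dd * a) = a * (1 + b * dd) by ring.
  exact: mulr_gt0.
- case: ifP => hs.
    rewrite ltr0_norm; [ring | lra].
  rewrite ltr0_norm; first by ring.
  have : 0 < 1 + b * dd by lra.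
  move=> h; have -> : a + b * (dd * a) = a * (1 + b * dd) by ring.
  by rewrite pmulr_llt0.
- by rewrite ltNge (ltW se0) /= ha !(mulr0, mul0r, addr0, add0r, normr0).
Qed.

Lemma Sd_entry (d xk : vec) eg i :
  (d *m Smat eg xk) 0 i = d 0 i * (if Num.sqrt eg < `|xk 0 i| then 1 else xk 0 i).
Proof. by rewrite /Smat mul_mx_diag !mxE. Qed.

Lemma sqrt_eg (eg : R) : 0 < eg < 1 -> 0 < Num.sqrt eg < 1.
Proof.
move=> /andP[e0 e1]; rewrite sqrtr_gt0 e0 /=.
by rewrite -[X in _ < X]sqrtr1 ltr_sqrt.
Qed.

Lemma norm1_step (xk d : vec) eg b : 0 < eg < 1 -> 0 <= b ->
  b * enorm d <= Num.sqrt eg ->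
  norm1 (xk + b *: (d *m Smat eg xk)) =
  norm1 xk + b * \sum_i sig (xk 0 i) * (d *m Smat eg xk) 0 i.
Proof.
move=> eg01 b0 bd; rewrite /norm1 mulr_sumr -big_split /=.
apply: eq_bigr => i _.
have -> : (xk + b *: (d *m Smat eg xk)) 0 i = xk 0 i + b * (d *m Smat eg xk) 0 i.
  by rewrite mxE [X in _ + X = _]mxE.
rewrite Sd_entry.
apply: abs_step => //; first exact: sqrt_eg.
apply: le_trans bd; rewrite ler_wpM2l //; exact: coord_le.
Qed.

Lemma lin_gvec (f : vec -> R) lam eg (xk d : vec) :
  dotv (grad f xk) (d *m Smat eg xk) +
    lam * \sum_i sig (xk 0 i) * (d *m Smat eg xk) 0 i
  = dotv (gvec f lam xk) (d *m Smat eg xk).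
Proof.
rewrite /dotv mulr_sumr -big_split /=; apply: eq_bigr => i _.
rewrite !Sd_entry /gvec /sig /grad !mxE /=.
case: (ltrgt0P (xk 0 i)) => ha; try ring.
by rewrite ltNge sqrtr_ge0 /= ha !(mulr0, mul0r, addr0).
Qed.

Lemma K_derive (f : vec -> R) (x v : vec) (l : R) : twice_cont_diff f ->
  forall b, is_derive b (1:R) (fun h : R => f (h *: v + x) + h * l)
                     (dotv (grad f (b *: v + x)) v + l).
Proof.
move=> [df _] b.
have h1 := @line_is_derive f x v b (@diff_derivable _ _ _ _ _ v (df (b *: v + x))).
have h2 := is_deriveZ l (@is_derive_id _ R^o b 1).
have h3 := is_deriveD h1 h2.
have -> : (fun h : R => f (h *: v + x) + h * l) = (fun h : R => f (h *: v + x)) + l \*: id.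
  by apply/funext => h; rewrite /= /GRing.scale /= mulrC.
move: h3; rewrite dir_grad // /GRing.scale /= mulr1.
by [].
Qed.

Lemma K_cont (f : vec -> R) (x v : vec) (l : R) : twice_cont_diff f ->
  continuous (fun h : R => f (h *: v + x) + h * l).
Proof.
move=> tcd y; apply: differentiable_continuous; apply/derivable1_diffP.
by case: (@K_derive f x v l tcd y).
Qed.

Lemma step_mono f lam eg eh etab beta eta theta (x : vec) t x' t' :
  0 < etab -> 1 < beta -> 0 < eta -> 0 < theta ->
  hpg_step f lam eg eh etab beta eta theta x t x' t' -> phi f lam x' <= phi f lam x.
Proof.
move=> e0 b1 et0 th0.
case=> [[_ [j [pc [_ [-> ->]]]]] | [_ [u [_ [_ [_ /= [j [nc [_ [-> _]]]]]]]]]].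
  apply: ltW; apply: (lt_le_trans pc); rewrite gerBl.
  apply: mulr_ge0; last exact: sqr_ge0.
  by apply: divr_ge0; [exact: ltW | apply: exprn_ge0; apply: ltW; apply: lt_trans b1].
apply: ltW; apply: (lt_le_trans nc); rewrite gerBl.
apply: mulr_ge0; last by apply: exprn_ge0; exact: enorm_ge0.
by apply: mulr_ge0; [exact: ltW | apply: exprn_ge0; exact: ltW].
Qed.
End S.

Lemma prod_le3 (R : realType) (a b c C : R) : 0 <= a <= 1 -> 0 <= b <= 1 -> 0 <= c <= C ->
  a * b * c <= C.
Proof.
move=> /andP[a0 a1] /andP[b0 b1] /andP[c0 cC].
have ab : a * b <= 1 by rewrite -(mulr1 1) ler_pM.
have ab0 : 0 <= a * b by rewrite mulr_ge0.
apply: (le_trans (ler_wpM2l ab0 cC)).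
by rewrite -[X in _ <= X]mul1r ler_wpM2r // (le_trans c0 cC).
Qed.

Theorem lemma6 (R : realType) (n : nat) (f : 'rV[R]_n -> R) (lam : R)
  (x0 : 'rV[R]_n) (LH eg eh beta etab eta theta : R)
  (x : nat -> 'rV[R]_n) (t : nat -> R) (k : nat) :
  0 < lam -> twice_cont_diff f ->
  ebounded_set (level_set f lam x0) ->
  hess_lipschitz_nbhd f (level_set f lam x0) ->
  0 < LH -> cubic_bound f (level_set f lam x0) LH ->
  0 < eg < 1 -> 0 < eh < 1 -> 1 < beta -> 0 < etab <= 1 ->
  0 < eta < 1 / 2 -> 0 < theta < 1 ->
  x 0%N = x0 -> t 0%N = 1 ->
  (forall i : nat, (i < k)%N ->
     hpg_step f lam eg eh etab beta eta theta (x i) (t i) (x i.+1) (t i.+1)) ->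
  nc_step f lam eg eh eta theta (x k) (t k) (x k.+1) (t k.+1) ->
  phi f lam (x k) - phi f lam (x k.+1) >
  1 / 8 * (eta * theta ^+ 2 * Num.min 1 (9 * (1 - 2 * eta) ^+ 2 / LH ^+ 2))
        * Num.min (eg * eh) (eh ^+ 3).
Proof.
move=> lam0 tcd _ _ LH0 cub egI /andP[eh0 eh1] b1 /andP[etab0 _] /andP[eta0 eta1]
  /andP[th0 th1] x00 _ hist nck.
have /andP[eg0 eg1] := egI.
have /andP[se0 se1] := sqrt_eg egI.
have Lk : phi f lam (x k) <= phi f lam x0.
  rewrite -x00; suff : forall i, (i <= k)%N -> phi f lam (x i) <= phi f lam (x 0%N).
    by apply.
  elim=> [|i IH] hi //; apply: le_trans (IH (ltnW hi)).
  exact: step_mono (hist i hi).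
move: nck; set xk := x k => -[_ [u [u1 [_ [lhle]]]]] /=.
set S := Smat eg xk.
set lh := quadf (Hk f eg xk) u.
set p := dotv (gvec f lam xk) (u *m S).
set c := - sgn p * `|lh|.
have dE : nc_dir f lam eg xk u = c *: u by [].
rewrite dE; set d := c *: u.
move=> [j [ncj [nprev [xk1 _]]]].
set v := d *m S.
have lhneg : lh < 0 by apply: (le_lt_trans lhle); rewrite mulNr oppr_lt0 divr_gt0.
have alh : `|lh| = - lh by rewrite ltr0_norm.
have ehlh : eh / 2 <= `|lh| by rewrite alh lerNr -mulNr.
have lh0 : 0 < `|lh| by rewrite normr_gt0 ltr0_neq0.
have sgn1 : `|sgn p| = 1 by rewrite /sgn; case: ifP => _; rewrite ?normrN normr1.
have nd : enorm d = `|lh| by rewrite /d enormZ u1 mulr1 /c normrM normrN sgn1 mul1r normr_id.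
have nv : enorm v <= `|lh|.
  rewrite -nd; apply: enorm_mono => i; rewrite /v /S Sd_entry normrM.
  rewrite -[X in _ <= X]mulr1 ler_wpM2l //.
  case: ifP => [_|]; first by rewrite normr1.
  by move=> /negbT; rewrite -leNgt => h; apply: (le_trans h); exact: ltW.
have qv : quadf (hess f xk) v = - `|lh| ^+ 3.
  rewrite /v /S /Smat quadf_diag -/(Hk f eg xk) /d quadfZ -/lh /c.
  have : sgn p ^+ 2 = 1 by rewrite /sgn; case: ifP => _; rewrite ?sqrrN expr1n.
  move=> s2; rewrite exprMn sqrrN s2 mul1r alh; ring.
set l := lam * \sum_i sig (xk 0 i) * v 0 i.
have gl : dotv (grad f xk) v + l <= 0.
  rewrite /l /v /S lin_gvec /d -scalemxAl dotvZr -/S -/p /c /sgn.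
  case: ifP => hp.
    by rewrite mulN1r mulNr oppr_le0 mulr_ge0.
  by rewrite mulNr mulN1r opprK mulr_ge0_le0 // ltW // ltNge hp.
have phiE : forall b, 0 <= b -> b * `|lh| <= Num.sqrt eg ->
    phi f lam (xk + b *: v) = (f (b *: v + xk) + b * l) + lam * norm1 xk.
  move=> b b0 bs; rewrite /phi /v /S norm1_step ?nd // -/S -/v -/l [xk + _]addrC.
  by rewrite /l; ring.
have xkL : level_set f lam x0 xk by [].
set a3 := 3 * (1 - 2 * eta) / LH.
have cubic : forall b, 0 < b -> b < a3 -> b * `|lh| <= Num.sqrt eg ->
    phi f lam (xk + b *: v) <= phi f lam xk ->
    phi f lam (xk + b *: v) < phi f lam xk - eta * b ^+ 2 * `|lh| ^+ 3.
  move=> b b0 ba bs ble.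
  have yL : level_set f lam x0 (xk + b *: v) by apply: le_trans Lk.
  have := cub _ _ xkL yL.
  have E : xk + b *: v - xk = b *: v by rewrite addrAC subrr add0r.
  rewrite E dotvZr quadfZ enormZ qv (gtr0_norm b0).
  move: ble; rewrite phiE ?(ltW b0) // [xk + _]addrC => ble F1.
  rewrite /phi.
  have F2 : b * dotv (grad f xk) v + b * l <= 0.
    by rewrite -mulrDr mulr_ge0_le0 // ltW.
  have F3 : LH / 6 * (b * enorm v) ^+ 3 <= LH / 6 * (b * `|lh|) ^+ 3.
    rewrite ler_wpM2l ?divr_ge0 ?(ltW LH0) // lerXn2r ?nnegrE ?mulr_ge0 ?enorm_ge0 ?(ltW b0) //.
    by rewrite ler_wpM2l // ltW.
  have LHb : LH * b < 3 * (1 - 2 * eta) by rewrite mulrC -ltr_pdivlMr.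
  have F4 : LH / 6 * (b * `|lh|) ^+ 3 < (1 - 2 * eta) / 2 * (b ^+ 2 * `|lh| ^+ 3).
    rewrite (_ : LH / 6 * (b * `|lh|) ^+ 3 = (LH * b / 6) * (b ^+ 2 * `|lh| ^+ 3)); last by ring.
    rewrite ltr_pM2r ?mulr_gt0 ?exprn_gt0 //; lra.
  set BA := b ^+ 2 * `|lh| ^+ 3 in F4 *.
  have -> : eta * b ^+ 2 * `|lh| ^+ 3 = eta * BA by rewrite /BA; ring.
  rewrite (_ : b ^+ 2 * - `|lh| ^+ 3 / 2 = - BA / 2) in F1; last by rewrite /BA; ring.
  lra.
pose K := fun h : R => f (h *: v + xk) + h * l.
have K0 : K 0 = f xk by rewrite /K scale0r add0r mul0r addr0.
have qv0 : quadf (hess f xk) v < 0 by rewrite qv oppr_lt0 exprn_gt0.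
have [del del0 Hdel] := local_decrease tcd gl qv0.
have ok : forall b, 0 < b -> b < a3 -> b * `|lh| <= Num.sqrt eg ->
    phi f lam (xk + b *: v) < phi f lam xk - eta * b ^+ 2 * `|lh| ^+ 3.
  move=> b b0 ba bs; rewrite ltNge; apply/negP => Hge.
  have Kb : f xk < K b.
    rewrite ltNge; apply/negP => Kle; move: Hge; rewrite leNgt cubic //.
    by rewrite phiE ?(ltW b0) // /phi lerD2r.
  set b' := Num.min del b.
  have b'0 : 0 < b' by rewrite lt_min del0 b0.
  have b'b : b' <= b by rewrite ge_min lexx orbT.
  have Kb' : K b' < f xk by apply: Hdel; rewrite b'0 ge_min lexx.
  have [g gI Kg] : exists2 g, g \in `[b', b] & K g = f xk.
    apply: IVT => //; first by apply: continuous_subspaceT; exact: K_cont.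
    by rewrite ge_min le_max (ltW Kb') (ltW Kb) orbT.
  move: gI; rewrite in_itv /= => /andP[g1 g2].
  have g0 : 0 < g by apply: lt_le_trans g1.
  have gs : g * `|lh| <= Num.sqrt eg by apply: le_trans bs; rewrite ler_wpM2r // ltW.
  have := cubic g g0 (le_lt_trans g2 ba) gs.
  have -> : phi f lam (xk + g *: v) = phi f lam xk by rewrite phiE ?(ltW g0) // -/(K g) Kg.
  move=> /(_ (lexx _)) H.
  have pos : 0 < eta * g ^+ 2 * `|lh| ^+ 3 by rewrite !mulr_gt0 ?exprn_gt0.
  lra.
move: ncj; rewrite /nc_cond nd -/S -/v => ncj.
rewrite xk1.
set m1 := Num.min 1 (9 * (1 - 2 * eta) ^+ 2 / LH ^+ 2).
set m2 := Num.min (eg * eh) (eh ^+ 3).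
set A := `|lh| ^+ 3.
suff : 1 / 8 * (eta * theta ^+ 2 * m1) * m2 <= eta * (theta ^+ j) ^+ 2 * A.
  rewrite -/v; move: ncj; rewrite -/A mulnC exprM; lra.
have a30 : 0 < a3 by apply: divr_gt0 => //; apply: mulr_gt0 => //; lra.
have m10 : 0 <= m1.
  rewrite le_min ler01 /=; apply: divr_ge0; [apply: mulr_ge0 => //; exact: sqr_ge0 | exact: sqr_ge0].
have m11 : m1 <= 1 by rewrite ge_min lexx.
have m1a : m1 <= a3 ^+ 2.
  rewrite /m1.
  have -> : 9 * (1 - 2 * eta) ^+ 2 / LH ^+ 2 = a3 ^+ 2.
    by rewrite /a3; field; exact: lt0r_neq0.
  by rewrite ge_min lexx orbT.
have m20 : 0 <= m2 by rewrite le_min !mulr_ge0 ?exprn_ge0 // ltW.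
have m2a : m2 <= eg * eh by rewrite ge_min lexx.
have m2b : m2 <= eh ^+ 3 by rewrite ge_min lexx orbT.
have ehA : eh ^+ 3 / 8 <= A.
  rewrite /A (_ : eh ^+ 3 / 8 = (eh / 2) ^+ 3); last by field.
  by rewrite lerXn2r ?nnegrE ?divr_ge0 ?(ltW eh0) ?normr_ge0.
have A0 : 0 < A by rewrite exprn_gt0.
have th2 : 0 <= theta ^+ 2 <= 1.
  rewrite exprn_ge0 ?ltW //=; rewrite expr2; nra.
clear xk1; case: j => [|j'] in ncj nprev *.
  rewrite expr0 expr1n mulr1.
  have P := prod_le3 th2 (introT andP (conj m10 m11)) (introT andP (conj m20 m2b)).
  rewrite (_ : 1 / 8 * (eta * theta ^+ 2 * m1) * m2 = eta * (theta ^+ 2 * m1 * m2 / 8)); last by ring.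
  rewrite ler_pM2l //; lra.
set al := theta ^+ j'.
have al0 : 0 < al by rewrite exprn_gt0.
have alt : a3 <= al \/ Num.sqrt eg < al * `|lh|.
  case: (leP a3 al) => [|h1]; first by left.
  case: (ltP (Num.sqrt eg) (al * `|lh|)) => [|h2]; first by right.
  exfalso; apply: (nprev j' (ltnSn j')); rewrite /nc_cond nd -/S -/v.
  have -> : theta ^+ (2 * j') = al ^+ 2 by rewrite mulnC exprM.
  exact: ok.
rewrite (_ : theta ^+ j'.+1 = theta * al); last by rewrite exprS.
rewrite exprMn.
rewrite (_ : 1 / 8 * (eta * theta ^+ 2 * m1) * m2 = (eta * theta ^+ 2) * (m1 * m2 / 8)); last by ring.
rewrite (_ : eta * (theta ^+ 2 * al ^+ 2) * A = (eta * theta ^+ 2) * (al ^+ 2 * A)); last by ring.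
rewrite ler_pM2l ?mulr_gt0 ?exprn_gt0 //.
case: alt => [ha | hb].
  have a2 : a3 ^+ 2 <= al ^+ 2 by rewrite !expr2 ler_pM // ltW.
  rewrite -mulrA; apply: ler_pM => //; first by rewrite divr_ge0.
    exact: le_trans m1a a2.
  lra.
have e2 : eg < (al * `|lh|) ^+ 2.
  rewrite -[X in X < _](@sqr_sqrtr _ eg) ?(ltW eg0) //.
  by rewrite ltrXn2r ?nnegrE ?mulr_ge0 ?sqrtr_ge0 ?ltW.
have h1 : m1 * m2 / 8 <= m2 / 8.
  by rewrite -mulrA ler_piMl // divr_ge0.
have h2 : eg * eh <= eg * (2 * `|lh|) by rewrite ler_wpM2l ?(ltW eg0) //; lra.
have h3 : eg * `|lh| <= al ^+ 2 * A.
  rewrite (_ : al ^+ 2 * A = (al * `|lh|) ^+ 2 * `|lh|); last by rewrite /A; ring.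
  by rewrite ler_wpM2r // ltW.
lra.
Qed.
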